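(* Let $M$ be a compact complex manifold of complex dimension $n$ and $0\le p,q\le n$. The following are equivalent: (1) $B^{p,q}=0$ and $D^{p,q}=0$; (2) the map $H^{p,q}_{\partial\bar\partial}\to H^{p,q}_{\partial+\bar\partial}$ induced by the identity is injective; (3) every $\omega\in\mathcal{E}^{p,q}(M)$ with $d\omega=0$ of the form $\omega=\partial a+\bar\partial b$ ($a\in\mathcal E^{p-1,q}(M)$, $b\in\mathcal E^{p,q-1}(M)$) satisfies $\omega=\partial\bar\partial\alpha$ for some $\alpha\in\mathcal{E}^{p-1,q-1}(M)$; (4) $B^{p,q}=0$ and $B^{q,p}=0$; (5) $D^{p,q}=0$ and $D^{q,p}=0$.
   Context: $\mathcal{E}^{p,q}(M)$ is the space of smooth complex $(p,q)$-forms. In bidegree $(p,q)$, $\ker\partial,\ker\bar\partial$ denote kernels on $\mathcal{E}^{p,q}(M)$, and $\mathrm{Im}\,\partial=\partial\mathcal{E}^{p-1,q}(M)$, $\mathrm{Im}\,\bar\partial=\bar\partial\mathcal{E}^{p,q-1}(M)$, $\mathrm{Im}\,\partial\bar\partial=\partial\bar\partial\mathcal{E}^{p-1,q-1}(M)$. $H^{p,q}_{\partial\bar\partial}=(\ker\partial\cap\ker\bar\partial)/\mathrm{Im}\,\partial\bar\partial$ (Bott–Chern), $H^{p,q}_{\partial+\bar\partial}=\ker\partial\bar\partial/(\mathrm{Im}\,\partial+\mathrm{Im}\,\bar\partial)$ (Aeppli), $B^{p,q}=(\mathrm{Im}\,\partial\cap\ker\bar\partial)/\mathrm{Im}\,\partial\bar\partial$,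 $D^{p,q}=(\ker\partial\cap\mathrm{Im}\,\bar\partial)/\mathrm{Im}\,\partial\bar\partial$, all in bidegree $(p,q)$. *)

(* Defs.v *)
From HB Require Import structures.
From mathcomp Require Import all_boot all_order all_algebra all_field.
Set Implicit Arguments. Unset Strict Implicit. Unset Printing Implicit Defensive.
Import Order.TTheory GRing.Theory Num.Theory.
Local Open Scope ring_scope.

Section DC.
Variables (V : lmodType algC) (E : int -> int -> V -> Prop)
  (del delb : {linear V -> V}) (sigma : V -> V).

(* Axioms satisfied by the space V of all smooth complex forms on M
   (E p q x : "x is a (p,q)-form"), del, delbar, and complex conjugation. *)
Definition is_conj_double_complex (n : nat) : Prop :=
  [/\
      (forall p q, E p q 0),
      (forall p q (a : algC) x y, E p q x -> E p q y -> E p q (a *: x + y)),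
      (forall p q x, (p < 0) || (q < 0) || (n%:Z < p) || (n%:Z < q) ->
          E p q x -> x = 0) &
      (forall p q p' q' x, (p, q) <> (p', q') -> E p q x -> E p' q' x -> x = 0)] /\
   [/\
      (forall p q x, E p q x -> E (p + 1) q (del x)),
      (forall p q x, E p q x -> E p (q + 1) (delb x)),
      (* d = del + delbar, d^2 = 0 *)
      (forall x, del (del x) = 0),
      (forall x, delb (delb x) = 0) &
      (forall x, del (delb x) + delb (del x) = 0)] /\
   [/\ (* complex conjugation: antilinear involution, (p,q) -> (q,p),
          conj o del = delbar o conj *)
      (forall x y, sigma (x + y) = sigma x + sigma y),
      (forall (a : algC) x, sigma (a *: x) = a^* *: sigma x),
      (forall x, sigma (sigma x) = x),
      (forall p q x, E p q x -> E q p (sigma x)) &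
      (forall x, sigma (del x) = delb (sigma x))].

Definition in_im_del p q (w : V) := exists a, E (p - 1) q a /\ del a = w.
Definition in_im_delb p q (w : V) := exists b, E p (q - 1) b /\ delb b = w.
Definition in_im_ddb p q (w : V) :=
  exists c, E (p - 1) (q - 1) c /\ del (delb c) = w.

(* B^{p,q} = (Im del /\ ker delbar) / Im del delbar = 0 *)
Definition B_zero p q : Prop :=
  forall w, E p q w -> in_im_del p q w -> delb w = 0 -> in_im_ddb p q w.

(* D^{p,q} = (ker del /\ Im delbar) / Im del delbar = 0 *)
Definition D_zero p q : Prop :=
  forall w, E p q w -> del w = 0 -> in_im_delb p q w -> in_im_ddb p q w.

(* H_BC^{p,q} -> H_A^{p,q} (induced by identity) is injective:
   a class [w] with w in ker del /\ ker delbar mapping to 0 in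
   ker(del delbar)/(Im del + Im delbar) is 0 in H_BC. *)
Definition BC_to_A_injective p q : Prop :=
  forall w, E p q w -> del w = 0 -> delb w = 0 ->
    (exists a b, E (p - 1) q a /\ E p (q - 1) b /\ w = del a + delb b) ->
    in_im_ddb p q w.

Definition cond3 p q : Prop :=
  forall w, E p q w -> del w + delb w = 0 ->
    forall a b, E (p - 1) q a -> E p (q - 1) b -> w = del a + delb b ->
    exists alpha, E (p - 1) (q - 1) alpha /\ w = del (delb alpha).

End DC.

(* Main.v *)
Require Import Defs.
From HB Require Import structures.
From mathcomp Require Import all_boot all_order all_algebra all_field.
Import Order.TTheory GRing.Theory Num.Theory.
Local Open Scope ring_scope.

Section Proofs.
Variables (V : lmodType algC) (E : int -> int -> V -> Prop)
  (del delb : {linear V -> V}) (sigma : V -> V) (n : nat).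
Hypothesis hM : is_conj_double_complex E del delb sigma n.

Lemma Eneg p q x : E p q x -> E p q (- x).
Proof.
move: hM => [[_ hC _ _] _] Hx.
have := hC p q (-1) x 0 Hx. rewrite addr0 scaleN1r. apply.
by move: hM => [[h0 _ _ _] _].
Qed.

Lemma Eadd p q x y : E p q x -> E p q y -> E p q (x + y).
Proof.
move: hM => [[_ hC _ _] _] Hx Hy.
by have := hC p q 1 x y Hx Hy; rewrite scale1r.
Qed.

Lemma Edel p q x : E (p - 1) q x -> E p q (del x).
Proof. move: hM => [_ [[hd _ _ _ _] _]] Hx. by have := hd _ _ _ Hx; rewrite subrK. Qed.

Lemma Edelb p q x : E p (q - 1) x -> E p q (delb x).
Proof. move: hM => [_ [[_ hd _ _ _] _]] Hx. by have := hd _ _ _ Hx; rewrite subrK. Qed.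

Lemma sig0 : sigma 0 = 0.
Proof.
move: hM => [_ [_ [hA _ _ _ _]]].
apply: (addrI (sigma 0)); by rewrite -hA !addr0.
Qed.

Lemma sigN x : sigma (- x) = - sigma x.
Proof.
move: hM => [_ [_ [hA _ _ _ _]]].
apply: (addrI (sigma x)); by rewrite -hA !subrr sig0.
Qed.

Lemma sig_delb x : sigma (delb x) = del (sigma x).
Proof.
move: hM => [_ [_ [_ _ hI _ hD]]].
by rewrite -{1}(hI x) -hD hI.
Qed.

Lemma sig_ddb c : sigma (del (delb c)) = del (delb (- sigma c)).
Proof.
move: hM => [_ [[_ _ _ _ hDD] [_ _ _ _ hD]]].
rewrite hD sig_delb raddfN /= raddfN /=.
have /eqP := hDD (sigma c); rewrite addr_eq0 => /eqP ->.
by rewrite opprK.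
Qed.

Lemma BD p q : B_zero E del delb q p -> D_zero E del delb p q.
Proof.
move=> HB w Ew dw [b [Eb hb]]; subst w.
move: hM => [_ [_ [_ _ hI hE hD]]].
have Eu : E q p (sigma (delb b)) by apply: hE.
have [c [Ec hc]] : in_im_ddb E del delb q p (sigma (delb b)).
  apply: HB => //.
  - exists (sigma b); split; last by rewrite sig_delb.
    exact: hE.
  - by rewrite -hD dw sig0.
exists (- sigma c); split; first by apply: Eneg; apply: hE.
by rewrite -sig_ddb hc hI.
Qed.

Lemma DB p q : D_zero E del delb q p -> B_zero E del delb p q.
Proof.
move=> HD w Ew [a [Ea ha]] dw; subst w.
move: hM => [_ [_ [_ _ hI hE hD]]].
have [c [Ec hc]] : in_im_ddb E del delb q p (sigma (del a)).
  apply: HD => //.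
  - exact: hE.
  - by rewrite -sig_delb dw sig0.
  - exists (sigma a); split; last by rewrite hD.
    exact: hE.
exists (- sigma c); split; first by apply: Eneg; apply: hE.
by rewrite -sig_ddb hc hI.
Qed.

Lemma L13 p q : B_zero E del delb p q /\ D_zero E del delb p q -> cond3 E del delb p q.
Proof.
move=> [HB HD] w Ew dw a b Ea Eb hw.
move: hM => [[_ _ _ hT] [[hd hdb hdd hdbdb hDD] _]].
have dw0 : del w = 0.
  have neq : (p + 1, q) <> (p, q + 1).
    by move=> [] /eqP; rewrite -subr_eq0 addrAC subrr add0r oner_eq0.
  have E2 : E p (q + 1) (del w).
    have -> : del w = - delb w by apply/eqP; rewrite -subr_eq0 opprK dw.
    by apply: Eneg; apply: hdb.
  exact: (hT _ _ _ _ _ neq (hd _ _ _ Ew) E2).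
have dbw0 : delb w = 0 by move: dw; rewrite dw0 add0r.
have [c1 [Ec1 h1]] : in_im_ddb E del delb p q (del a).
  apply: HB; first exact: Edel.
    by exists a.
  by move: dbw0; rewrite hw raddfD /= hdbdb addr0.
have [c2 [Ec2 h2]] : in_im_ddb E del delb p q (delb b).
  apply: HD; first exact: Edelb.
    by move: dw0; rewrite hw raddfD /= hdd add0r.
  by exists b.
exists (c1 + c2); split; first exact: Eadd.
by rewrite hw !raddfD /= h1 h2.
Qed.

Lemma L32 p q : cond3 E del delb p q -> BC_to_A_injective E del delb p q.
Proof.
move=> H w Ew dw dbw [a [b [Ea [Eb hw]]]].
case: (H w Ew _ a b Ea Eb hw) => [|al [Eal hal]]; first by rewrite dw dbw addr0.
by exists al.
Qed.

Lemma L21 p q : BC_to_A_injective E del delb p q ->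
  B_zero E del delb p q /\ D_zero E del delb p q.
Proof.
move: hM => [_ [[_ _ hdd hdbdb _] _]].
move=> H; split.
- move=> w Ew [a [Ea ha]] dbw; apply: H => //.
    by rewrite -ha hdd.
  exists a, 0; do !split => //; last by rewrite raddf0 addr0.
  by move: hM => [[h0 _ _ _] _].
- move=> w Ew dw [b [Eb hb]]; apply: H => //.
    by rewrite -hb hdbdb.
  exists 0, b; do !split => //; last by rewrite raddf0 add0r.
  by move: hM => [[h0 _ _ _] _].
Qed.

End Proofs.

Theorem mainTheorem7 (V : lmodType algC) (E : int -> int -> V -> Prop)
  (del delb : {linear V -> V}) (sigma : V -> V) (n : nat)
  (hM : is_conj_double_complex E del delb sigma n)
  (p q : int) (hp : 0 <= p <= n%:Z) (hq : 0 <= q <= n%:Z) :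
  [<-> B_zero E del delb p q /\ D_zero E del delb p q;
       BC_to_A_injective E del delb p q;
       cond3 E del delb p q;
       B_zero E del delb p q /\ B_zero E del delb q p;
       D_zero E del delb p q /\ D_zero E del delb q p].
Proof.
have L13' := @L13 _ _ _ _ _ _ hM p q. have L32' := @L32 V E del delb p q.
have L21' := @L21 _ _ _ _ _ _ hM p q. have BD' := @BD _ _ _ _ _ _ hM. have DB' := @DB _ _ _ _ _ _ hM.
tfae.
- move=> /L13' /L32' H; exact H.
- move=> /L21' /L13' H; exact H.
- move=> /L32' /L21' [HB HD]; split; [exact: HB | exact: (DB' q p HD)].
- move=> [HB HB']; split; [exact: (BD' p q HB') | exact: (BD' q p HB)].
- move=> [HD HD']; split; [exact: (DB' p q HD') | exact: HD].
Qed.
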